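(* Let $\kappa=(\xi,\eta)\in S\mathbb{H}$ and $\nu=(\alpha,\beta)\in\mathbb{H}^2$. Then $\{\kappa,\nu\}=0$ if and only if $\nu=\kappa x$ for some $x\in\mathbb{H}$.
   Context: For $q=a+bi+cj+dk\in\mathbb{H}$, $q^*=a+bi+cj-dk$, $\bar q=a-bi-cj-dk$. $\mathcal{V}=\mathrm{span}_\mathbb{R}\{1,i,j\}$. $S\mathbb{H}=\{(\xi,\eta)\in\mathbb{H}^2\setminus\{(0,0)\}:\xi\bar\eta\in\mathcal{V}\}$. The bracket of $\kappa_m=(\xi_m,\eta_m)\in\mathbb{H}^2$ is $\{\kappa_1,\kappa_2\}=\xi_1^*\eta_2-\eta_1^*\xi_2$. Right multiplication: $(\xi,\eta)x=(\xi x,\eta x)$. *)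

(* Defs.v *)
From mathcomp Require Import all_boot all_order all_algebra.
From mathcomp Require Import reals.
Set Implicit Arguments. Unset Strict Implicit. Unset Printing Implicit Defensive.
Import Order.TTheory GRing.Theory Num.Theory.
Local Open Scope ring_scope.

(* q = q0 + q1 i + q2 j + q3 k *)
Record quat (R : realType) := Quat { q0 : R; q1 : R; q2 : R; q3 : R }.

Section Quat.
Variable R : realType.
Implicit Types p q : quat R.

Definition qzero : quat R := Quat 0 0 0 0.
Definition qadd p q := Quat (q0 p + q0 q) (q1 p + q1 q) (q2 p + q2 q) (q3 p + q3 q).
Definition qsub p q := Quat (q0 p - q0 q) (q1 p - q1 q) (q2 p - q2 q) (q3 p - q3 q).
(* Hamilton product, i^2 = j^2 = k^2 = ijk = -1 *)
Definition qmul p q := Quat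
  (q0 p * q0 q - q1 p * q1 q - q2 p * q2 q - q3 p * q3 q)
  (q0 p * q1 q + q1 p * q0 q + q2 p * q3 q - q3 p * q2 q)
  (q0 p * q2 q - q1 p * q3 q + q2 p * q0 q + q3 p * q1 q)
  (q0 p * q3 q + q1 p * q2 q - q2 p * q1 q + q3 p * q0 q).
Definition qconj q := Quat (q0 q) (- q1 q) (- q2 q) (- q3 q).
Definition qstar q := Quat (q0 q) (q1 q) (q2 q) (- q3 q).

Definition inV q : Prop := q3 q = 0.

Definition inSH (k : quat R * quat R) : Prop :=
  k <> (qzero, qzero) /\ inV (qmul k.1 (qconj k.2)).

Definition qbracket (k1 k2 : quat R * quat R) : quat R :=
  qsub (qmul (qstar k1.1) k2.2) (qmul (qstar k1.2) k2.1).

Definition qrmul (k : quat R * quat R) (x : quat R) : quat R * quat R :=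
  (qmul k.1 x, qmul k.2 x).
End Quat.

(* Main.v *)
Require Import Defs.
From mathcomp Require Import all_boot all_order all_algebra.
From mathcomp Require Import reals.
From mathcomp Require Import ring lra.
Set Implicit Arguments. Unset Strict Implicit. Unset Printing Implicit Defensive.
Import Order.TTheory GRing.Theory Num.Theory.
Local Open Scope ring_scope.

Section H.
Variable R : realType.
Implicit Types p q x xi eta al be : quat R.

Definition qscale (c : R) q := Quat (c * q0 q) (c * q1 q) (c * q2 q) (c * q3 q).
Definition qk : quat R := Quat 0 0 0 1.
Definition qn q := q0 q ^+ 2 + q1 q ^+ 2 + q2 q ^+ 2 + q3 q ^+ 2.
Definition HH xi eta := q3 (qmul xi (qconj eta)).

Ltac qsolve := rewrite /qbracket /qrmul /qscale /qk /qn /HH /qmul /qsub /qadd /qstar /qconj /=;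
  f_equal; ring.

Lemma key0 xi eta x :
  qbracket (xi, eta) (qrmul (xi, eta) x) = qscale (-2 * HH xi eta) (qmul qk x).
Proof. case: xi eta x => [? ? ? ?] [? ? ? ?] [? ? ? ?]; qsolve. Qed.

Lemma key1 xi eta al be :
  qmul eta (qmul (qconj xi) al) =
  qsub (qscale (qn xi) be) (qadd (qmul (qconj (qstar xi)) (qbracket (xi, eta) (al, be)))
     (qscale (2 * HH xi eta) (qmul qk al))).
Proof. case: xi eta al be => [? ? ? ?] [? ? ? ?] [? ? ? ?] [? ? ? ?]; qsolve. Qed.

Lemma key2 xi eta al be :
  qmul xi (qmul (qconj eta) be) =
  qadd (qscale (qn eta) al) (qadd (qmul (qconj (qstar eta)) (qbracket (xi, eta) (al, be)))
     (qscale (2 * HH xi eta) (qmul qk be))).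
Proof. case: xi eta al be => [? ? ? ?] [? ? ? ?] [? ? ? ?] [? ? ? ?]; qsolve. Qed.

Lemma key3 xi al : qmul xi (qmul (qconj xi) al) = qscale (qn xi) al.
Proof. case: xi al => [? ? ? ?] [? ? ? ?]; qsolve. Qed.

Lemma mulsc p c q : qmul p (qscale c q) = qscale c (qmul p q).
Proof. case: p q => [? ? ? ?] [? ? ? ?]; qsolve. Qed.

Lemma scK c q : c != 0 -> qscale c^-1 (qscale c q) = q.
Proof. move=> hc; case: q => ? ? ? ?; rewrite /qscale /=; f_equal; field; exact: hc. Qed.

Lemma qn_eq0 q : qn q = 0 -> q = qzero R.
Proof.
case: q => a b c d e; rewrite /qn /= in e.
have ha : a = 0 by nra.
have hb : b = 0 by nra.
have hc : c = 0 by nra.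
have hd : d = 0 by nra.
by rewrite ha hb hc hd.
Qed.

Lemma simp0 xi eta al be : qbracket (xi, eta) (al, be) = qzero R -> HH xi eta = 0 ->
  qmul eta (qmul (qconj xi) al) = qscale (qn xi) be /\
  qmul xi (qmul (qconj eta) be) = qscale (qn eta) al.
Proof.
move=> hb hh; rewrite (key1 xi eta al be) (key2 xi eta al be) hb hh.
case: xi eta al be {hb hh} => [? ? ? ?] [? ? ? ?] [? ? ? ?] [? ? ? ?]; split; qsolve.
Qed.
End H.

Theorem lemma3p5 (R : realType) (kappa nu : quat R * quat R) :
  inSH kappa ->
  (qbracket kappa nu = qzero R <-> exists x : quat R, nu = qrmul kappa x).
Proof.
case: kappa nu => xi eta [al be] [hne hV].
have hh : HH xi eta = 0 by exact: hV.
split.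
- move=> hb; have [e1 e2] := simp0 hb hh.
  have [hxi0 | hn] := eqVneq (qn xi) 0.
  + have hxi := qn_eq0 hxi0.
    have [heta0 | hn] := eqVneq (qn eta) 0.
      by exfalso; apply: hne; rewrite hxi (qn_eq0 heta0).
    exists (qscale (qn eta)^-1 (qmul (qconj eta) be)).
    by rewrite /qrmul /= !mulsc e2 key3 !scK.
  +     exists (qscale (qn xi)^-1 (qmul (qconj xi) al)).
    by rewrite /qrmul /= !mulsc e1 key3 !scK.
- move=> [x ->]; rewrite (key0 xi eta x) hh mulr0 /qscale /qzero /=.
  by rewrite !mul0r.
Qed.
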